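(* Let $m\ge1$, let $D$ be a finite set with $|D|=3m$ whose elements are numbered $1,\dots,3m$, and let $\mathcal{C}=\{c_1,\dots,c_\tau\}$ be a collection of $\tau\ge m$ three-element subsets of $D$. For each $i$, let $g_i\in\mathbb{R}^{3m}$ be given by $(g_i)_j=1$ if element $j$ of $D$ lies in $c_i$ and $(g_i)_j=0$ otherwise. For any integer $l\le m$ and $\mathcal{L}=\{i_1,\dots,i_l\}\subseteq\{1,\dots,\tau\}$, let $G_{\mathcal{L}}=[g_{i_1}\ \cdots\ g_{i_l}]$ and $r=\mathrm{rank}(G_{\mathcal{L}})$. Let $d=[1\ \cdots\ 1]^T\in\mathbb{R}^{3m}$. Suppose $\mathcal{C}$ contains no exact cover of $D$ (a subcollection in which every element of $D$ occurs in exactly one member). Then for every such $\mathcal{L}$ with $|\mathcal{L}|\le m$ there exists an orthogonal matrix $N\in\mathbb{R}^{3m\times3m}$ such that $$\begin{bmatrix} d^T\\ G_{\mathcal{L}}^T\end{bmatrix}N=\begin{bmatrix}\gamma & \beta\\ \mathbf{0} & \tilde G_{\mathcal{L}}^T\end{bmatrix},$$ where $\tilde G_{\mathcal{L}}^T\in\mathbb{R}^{l\times r}$ has full column rank, $\gamma\in\mathbb{R}^{1\times(3m-r)}$ has at least one entry (say $\omega\ge1$ entries) equal to $1$, and $\beta\in\mathbb{R}^{1\times r}$. Furthermore, elementary row operations transform $\begin{bmatrix}\gamma & \beta\\ \mathbf{0} & \tilde G_{\mathcal{L}}^T\end{bmatrix}$ into $\begin{bmatrix}\gamma & \mathbf{0}\\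 \mathbf{0} & \tilde G_{\mathcal{L}}^T\end{bmatrix}$. *)

(* Defs.v *)
From HB Require Import structures.
From mathcomp Require Import all_boot all_order all_algebra.
From mathcomp Require Export reals.
Set Implicit Arguments. Unset Strict Implicit. Unset Printing Implicit Defensive.
Import Order.TTheory GRing.Theory Num.Theory.
Local Open Scope ring_scope.

Definition incvec (R : realType) (m tau : nat) (c : 'I_tau -> {set 'I_(3 * m)})
  (i : 'I_tau) : 'cV[R]_(3 * m) :=
  \col_j (if j \in c i then 1 else 0).

Definition GL (R : realType) (m tau : nat) (c : 'I_tau -> {set 'I_(3 * m)})
  (L : {set 'I_tau}) : 'M[R]_(3 * m, #|L|) :=
  \matrix_(j, k) incvec R c (enum_val k) j ord0.

Definition dvec (R : realType) (m : nat) : 'cV[R]_(3 * m) := const_mx 1.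

Definition exact_cover (m tau : nat) (c : 'I_tau -> {set 'I_(3 * m)})
  (S : {set 'I_tau}) : Prop :=
  forall j : 'I_(3 * m), #|[set i in S | j \in c i]| = 1%N.

(* Main.v *)
Require Import Defs.
From HB Require Import structures.
From mathcomp Require Import all_boot all_order all_algebra.
From mathcomp Require Import reals.
From mathcomp Require Import zify.
Import Order.TTheory GRing.Theory Num.Theory.
Local Open Scope ring_scope.
Set Implicit Arguments. Unset Strict Implicit.

Section Ortho.
Variable R : realType.

Lemma normalize n (w : 'rV[R]_n) : w != 0 ->
  exists a : R, (a *: w) *m (a *: w)^T = 1%:M.
Proof.
move=> wn0.
have [k wk] : exists k, w 0 k != 0.
  apply/existsP; apply: contraNT wn0; rewrite negb_exists => /forallP H.
  by apply/eqP/rowP => j; rewrite mxE; apply/eqP; have := H j; rewrite negbK.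
set s := \sum_j w 0 j * w 0 j.
have s_gt0 : 0 < s.
  rewrite /s (bigD1 k) //=; apply: ltr_pwDl; first by by rewrite -expr2 exprn_even_gt0.
  by apply: sumr_ge0 => j _; rewrite -expr2 sqr_ge0.
exists (Num.sqrt s)^-1.
have hs : (w *m w^T) = s%:M.
  by apply/matrixP => i j; rewrite !ord1 !mxE /=; apply: eq_bigr => l _; rewrite !mxE.
rewrite [(_ *: w)^T]linearZ /= -scalemxAl -scalemxAr hs !scale_scalar_mx.
congr (_%:M); rewrite mulrCA mulrA -expr2 exprVn sqr_sqrtr ?ltW // mulVf //.
by rewrite gt_eqF.
Qed.

Lemma rank_orth k n (V : 'M[R]_(k, n)) : V *m V^T = 1%:M -> \rank V = k.
Proof.
move=> H; apply/eqP; rewrite eqn_leq rank_leq_row /=.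
by rewrite -{1}(mxrank1 R k) -H mxrankM_maxl.
Qed.

Lemma ext_step p k n (S : 'M[R]_(p, n)) (V : 'M[R]_(k, n)) :
  V *m V^T = 1%:M -> (k < \rank S)%N ->
  exists v : 'rV[R]_n, v *m v^T = 1%:M /\ v *m V^T = 0 /\ (v <= S)%MS.
Proof.
move=> HV hk.
set K := kermx V^T.
have rK : \rank K = (n - k)%N by rewrite mxrank_ker mxrank_tr rank_orth.
have := mxrank_sum_cap S K; rewrite rK.
have := rank_leq_col (S + K)%MS => hle hsum.
have hC : (0 < \rank (S :&: K))%N.
  have hk' : (k <= n)%N by rewrite -(rank_orth HV) rank_leq_col.
  move: hle hsum hk hk'; set a := \rank _; set b := \rank _; set c := \rank _ => *.
  lia.
set w := nz_row (S :&: K)%MS.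
have wn0 : w != 0 by rewrite nz_row_eq0 -mxrank_eq0 -lt0n.
have wsub : (w <= S :&: K)%MS by apply: nz_row_sub.
rewrite sub_capmx in wsub; case/andP: wsub => wS wK.
have [a ha] := normalize wn0.
exists (a *: w); split => //; split; last by apply: scalemx_sub.
by rewrite -scalemxAl; move: wK; rewrite sub_kermx => /eqP ->; rewrite scaler0.
Qed.

Lemma ext p n (S : 'M[R]_(p, n)) d : forall k (V : 'M[R]_(k, n)),
  V *m V^T = 1%:M -> (V <= S)%MS -> (k + d <= \rank S)%N ->
  exists W : 'M[R]_(d, n), W *m W^T = 1%:M /\ V *m W^T = 0 /\ (W <= S)%MS.
Proof.
elim: d => [|d IH] k V HV VS hkd.
  exists 0; split; first by apply/matrixP => -[].
  by split; [rewrite thinmx0 | rewrite sub0mx].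
have hkS : (k < \rank S)%N by apply: leq_trans hkd; rewrite addnS ltnS leq_addr.
have [v [hv [hvV vS]]] := ext_step HV hkS.
have HV' : col_mx V v *m (col_mx V v)^T = 1%:M.
  rewrite tr_col_mx mul_col_row HV hv hvV.
  have -> : V *m v^T = 0 by rewrite -[V]trmxK -trmx_mul hvV trmx0.
  by rewrite [RHS]scalar_mx_block.
have hk' : ((k + 1) + d <= \rank S)%N by lia.
have VS' : (col_mx V v <= S)%MS by rewrite col_mx_sub VS vS.
have [W' [hW' [hVW' W'S]]] := IH _ _ HV' VS' hk'.
move: hVW'; rewrite mul_col_mx => /eqP; rewrite col_mx_eq0 => /andP[/eqP h1 /eqP h2].
exists (col_mx v W' : 'M_(1 + d, n)); split.
  change (col_mx v W' *m (col_mx v W')^T = (1%:M : 'M_(1 + d))).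
  rewrite tr_col_mx mul_col_row hv hW' h2.
  have -> : W' *m v^T = 0 by rewrite -[W']trmxK -trmx_mul h2 trmx0.
  by rewrite [RHS]scalar_mx_block.
split; last by change (col_mx v W' <= S)%MS; rewrite col_mx_sub vS W'S.
change (V *m (col_mx v W')^T = (0 : 'M_(k, 1 + d))).
rewrite tr_col_mx mul_mx_row h1.
have -> : V *m v^T = 0 by rewrite -[V]trmxK -trmx_mul hvV trmx0.
by rewrite row_mx0.
Qed.
End Ortho.


Lemma uncovered (m tau : nat) (c : 'I_tau -> {set 'I_(3 * m)})
  (hc3 : forall i, #|c i| = 3%N)
  (hnoec : ~ exists S : {set 'I_tau}, exact_cover c S)
  (L : {set 'I_tau}) (hL : (#|L| <= m)%N) :
  exists j : 'I_(3 * m), forall i, i \in L -> j \notin c i.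
Proof.
case: (boolP [exists j, [forall i in L, j \notin c i]]).
  by case/existsP => j /forall_inP H; exists j.
rewrite negb_exists => /forallP Hall.
exfalso; apply: hnoec; exists L => j.
set f := fun j : 'I_(3 * m) => #|[set i in L | j \in c i]|.
have fE : forall j, f j = \sum_(i in L) (j \in c i : nat).
  move=> j'; rewrite /f -sum1_card big_mkcond [RHS]big_mkcond /=.
  by apply: eq_bigr => i _; rewrite inE; case: (i \in L); case: (j' \in c i).
have f1 : forall j, (1 <= f j)%N.
  move=> j'; have := Hall j'; rewrite negb_forall_in => /existsP [i /andP [iL]].
  rewrite negbK => ji; rewrite lt0n; apply/eqP => /eqP; rewrite cards_eq0 => /eqP h.
  have : i \in [set i in L | j' \in c i] by rewrite inE iL ji.
  by rewrite h inE.
have hsum : (\sum_j f j = 3 * #|L|)%N.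
  rewrite (eq_bigr _ (fun j _ => fE j)) exchange_big /=.
  rewrite (eq_bigr (fun _ => 3%N)) ?sum_nat_const 1?mulnC // => i _.
  rewrite -[in RHS](hc3 i) -sum1_card [RHS]big_mkcond /=; apply: eq_bigr => j' _; by case: (j' \in c i).
apply/eqP; rewrite eqn_leq f1 andbT; apply/negP => /negP; rewrite -ltnNge => f2.
have : (2 + (3 * m).-1 <= \sum_j f j)%N.
  rewrite (bigD1 j) //=; apply: leq_add => //.
  have := @leq_sum _ (index_enum 'I_(3 * m)) (fun i => i != j) (fun _ => 1%N) f (fun j' _ => f1 j').
  by rewrite sum1dep_card cardsE cardC1 card_ord.
rewrite hsum => H.
have hm : (0 < 3 * m)%N by apply: leq_ltn_trans (ltn_ord j).
move: H hm hL; clear; lia.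
Qed.

Theorem lemma5 (R : realType) (m tau : nat) (c : 'I_tau -> {set 'I_(3 * m)})
  (hm : (1 <= m)%N) (htau : (m <= tau)%N)
  (hc3 : forall i, #|c i| = 3%N)
  (hnoec : ~ exists S : {set 'I_tau}, exact_cover c S)
  (L : {set 'I_tau}) (hL : (#|L| <= m)%N) :
  let G := GL R c L in
  let r := \rank G in
  exists (N1 : 'M[R]_(3 * m, 3 * m - r)) (N2 : 'M[R]_(3 * m, r))
         (gamma : 'M[R]_(1, 3 * m - r)) (beta : 'M[R]_(1, r))
         (Gt : 'M[R]_(#|L|, r)),
    (* N = [N1 N2] is an orthogonal matrix *)
    (row_mx N1 N2)^T *m row_mx N1 N2 = 1%:M /\
    row_mx N1 N2 *m (row_mx N1 N2)^T = 1%:M /\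
    col_mx (dvec R m)^T G^T *m row_mx N1 N2 = block_mx gamma beta 0 Gt /\
    \rank Gt = r /\
    (exists j, gamma ord0 j = 1) /\
    exists E : 'M[R]_(1 + #|L|), E \in unitmx /\
      E *m block_mx gamma beta 0 Gt = block_mx gamma 0 0 Gt.
Proof.
move=> G r.
have [j hj] := uncovered hc3 hnoec hL.
set e : 'rV[R]_(3 * m) := delta_mx 0 j.
have He : e *m e^T = 1%:M.
  rewrite /e trmx_delta mul_delta_mx.
  by apply/matrixP => a b; rewrite !ord1 !mxE.
have eG : e *m G = 0.
  rewrite /e -rowE; apply/rowP => k; rewrite !mxE /G /GL.
  by rewrite (negbTE (hj _ (enum_valP k))).
have eK : (e <= kermx G)%MS by rewrite sub_kermx eG.
have rK : \rank (kermx G) = (3 * m - r)%N by rewrite mxrank_ker.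
have rle : (r <= #|L|)%N by apply: rank_leq_col.
have hs : (1 + (3 * m - r - 1) <= \rank (kermx G))%N by rewrite rK; lia.
have [W [hW [heW WK]]] := ext He eK hs.
set s := (3 * m - r - 1)%N in W hW heW WK.
set A : 'M[R]_(1 + s, 3 * m) := col_mx e W.
have HA : A *m A^T = 1%:M.
  rewrite /A tr_col_mx mul_col_row He hW heW.
  have -> : W *m e^T = 0 by rewrite -[W]trmxK -trmx_mul heW trmx0.
  by rewrite [RHS]scalar_mx_block.
have AG : A *m G = 0.
  rewrite /A mul_col_mx eG; move: WK; rewrite sub_kermx => /eqP ->.
  by rewrite col_mx0.
have h1 : (1 + s + r <= \rank (1%:M : 'M[R]_(3 * m)))%N by rewrite mxrank1; lia.
have [B [hB [hAB _]]] := ext HA (submx1 A) h1.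
have Hs : (3 * m - r)%N = (1 + s)%N by rewrite /s; lia.
have Hn : (1 + s + r)%N = (3 * m)%N by rewrite /s; lia.
rewrite Hs.
set N := row_mx A^T B^T.
have hBA : B *m A^T = 0 by rewrite -[B]trmxK -trmx_mul hAB trmx0.
have HN1 : N^T *m N = 1%:M.
  rewrite /N tr_row_mx !trmxK mul_col_row HA hB hAB hBA.
  by rewrite [RHS]scalar_mx_block.
have HN2 : N *m N^T = 1%:M.
  have rN : row_free N.
    rewrite /row_free; apply/eqP/anti_leq; rewrite rank_leq_row /=.
    by rewrite -[X in (X <= _)%N]Hn -{1}(mxrank1 R (1 + s + r)) -HN1 mxrankM_maxr.
  apply/eqP; rewrite -subr_eq0 -(mulmx_free_eq0 _ rN) mulmxBl -mulmxA HN1.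
  by rewrite mul1mx mulmx1 subrr.
exists A^T, B^T, ((dvec R m)^T *m A^T), ((dvec R m)^T *m B^T), (G^T *m B^T).
split; first exact: HN1.
split; first exact: HN2.
split.
  rewrite mul_col_row; congr block_mx.
  by rewrite -trmx_mul AG trmx0.
split.
  rewrite -trmx_mul mxrank_tr.
  have hQ : col_mx A B *m G = col_mx 0 (B *m G) by rewrite mul_col_mx AG.
  have -> : \rank (B *m G) = \rank (col_mx A B *m G).
    by rewrite hQ -addsmxE adds0mx.
  apply/eqP; rewrite eqn_leq mxrankM_maxr /=.
  have -> : col_mx A B = N^T by rewrite /N tr_row_mx !trmxK.
  by rewrite /r -{1}[G]mul1mx -HN2 -mulmxA mxrankM_maxr.
split.
  exists 0.
  have -> : (0 : 'I_(1 + s)) = lshift s 0 by apply/val_inj.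
  rewrite /A tr_col_mx mul_mx_row row_mxEl /e !mxE (bigD1 j) //= big1 => [|k kj].
    by rewrite !mxE !eqxx mulr1 addr0.
  by rewrite !mxE (negbTE kj) andbF mulr0.
set Gt := G^T *m B^T.
set beta := (dvec R m)^T *m B^T.
have rGt : \rank Gt = r.
  rewrite /Gt -trmx_mul mxrank_tr.
  have hQ : col_mx A B *m G = col_mx 0 (B *m G) by rewrite mul_col_mx AG.
  have -> : \rank (B *m G) = \rank (col_mx A B *m G).
    by rewrite hQ -addsmxE adds0mx.
  apply/eqP; rewrite eqn_leq mxrankM_maxr /=.
  have -> : col_mx A B = N^T by rewrite /N tr_row_mx !trmxK.
  by rewrite /r -{1}[G]mul1mx -HN2 -mulmxA mxrankM_maxr.
have : (beta <= Gt)%MS by apply: submx_full; rewrite /row_full rGt.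
case/submxP => D hD.
exists (block_mx 1%:M (- D) 0 1%:M); split.
  by rewrite unitmxE det_ublock !det1 mulr1 unitr1.
rewrite mulmx_block !mul1mx !mul0mx !mulNmx -hD subrr.
by rewrite mulmx0 subr0 !add0r.
Qed.
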